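(* Let $a<b<c$ be elements of $\mathcal{C}_n$ and let $k$ be an integer with $a+1\le k\le b$. Then the layer $\mathcal{L}^{k}_{a}\left(\triangle^{(n)}\{a,b,c\}\right)=\{a_kb_{n-k-i}c_i:\ 0\le i\le n-k\}$ is a subsemiring of $\triangle^{(n)}\{a,b,c\}$.
   Context: $\mathcal{C}_n=\{0,1,\dots,n-1\}$ with its usual order; $\widehat{\mathcal{E}}_{\mathcal{C}_n}$ is the set of all order-preserving maps $\mathcal{C}_n\to\mathcal{C}_n$ (not required to fix $0$), a semiring with $(\alpha+\beta)(x)=\max(\alpha(x),\beta(x))$ and $(\alpha\cdot\beta)(x)=\beta(\alpha(x))$. The notation $a_kb_\ell c_m$ (with $k+\ell+m=n$) denotes the map sending $0,\dots,k-1$ to $a$, the next $\ell$ elements to $b$ and the last $m$ elements to $c$ (factors with subscript $0$ are omitted). The triangle $\triangle^{(n)}\{a,b,c\}$ is the set of all $\alpha\in\widehat{\mathcal{E}}_{\mathcal{C}_n}$ with image in $\{a,b,c\}$. The layer $\mathcal{L}^{k}_{a}$ is the set of elements of the triangle mapping exactly $k$ elements of $\mathcal{C}_n$ to $a$. *)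

(* Defs.v *)
From mathcomp Require Import all_boot.
Set Implicit Arguments. Unset Strict Implicit. Unset Printing Implicit Defensive.

(* C_n = 'I_n with the usual order; maps C_n -> C_n are finite functions. *)
Notation map_n n := {ffun 'I_n -> 'I_n}.

Definition order_preserving n (f : map_n n) : bool :=
  [forall x : 'I_n, forall y : 'I_n, (x <= y) ==> (f x <= f y)].

Definition eadd n (f g : map_n n) : map_n n :=
  [ffun x => if f x <= g x then g x else f x].
Definition emul n (f g : map_n n) : map_n n :=
  [ffun x => g (f x)].                                   (* (f.g)(x) = g(f(x)) *)

Definition triangle n (a b c : 'I_n) : {set map_n n} :=
  [set f | order_preserving f && [forall x, f x \in [:: a; b; c]]].

Definition layer n (k : nat) (a : 'I_n) (S : {set map_n n}) : {set map_n n} :=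
  [set f in S | #|[set x | f x == a]| == k].

(* a_k b_l c_m : first k elements to a, next l to b, remaining to c *)
Definition abc n (a b c : 'I_n) (k l : nat) : map_n n :=
  [ffun x : 'I_n => if x < k then a else if x < k + l then b else c].

Definition subsemiring n (T S : {set map_n n}) : Prop :=
  [/\ T \subset S, T != set0,
      (forall f g, f \in T -> g \in T -> eadd f g \in T) &
      (forall f g, f \in T -> g \in T -> emul f g \in T)].

(* Main.v *)
Require Import Defs.
From mathcomp Require Import all_boot.
From mathcomp Require Import zify.

Lemma cardlt n j : j <= n -> #|[set x : 'I_n | x < j]| = j.
Proof.
move=> jn.
have -> : [set x : 'I_n | x < j] = [set widen_ord jn y | y : 'I_j].
  apply/setP=> x; rewrite inE; apply/idP/imsetP.
    move=> xj; exists (Ordinal xj) => //; exact: val_inj.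
  by move=> [y _ ->] /=.
rewrite card_imset ?card_ord //.
by move=> y z /(congr1 val) /= /val_inj.
Qed.

Lemma dc n (D : {set 'I_n}) :
  (forall x y : 'I_n, x <= y -> y \in D -> x \in D) ->
  forall x, (x \in D) = (x < #|D|).
Proof.
move=> H x; apply/idP/idP.
  move=> xD.
  have : [set y : 'I_n | y < x.+1] \subset D.
    by apply/subsetP=> y; rewrite inE ltnS => yx; apply: H yx xD.
  by move/subset_leq_card; rewrite cardlt.
apply: contraTT => xD; rewrite -leqNgt.
have : D \subset [set y : 'I_n | y < x].
  apply/subsetP=> y yD; rewrite inE ltnNge; apply/negP=> xy.
  by rewrite (H _ _ xy yD) in xD.
by move/subset_leq_card; rewrite cardlt // ltnW.
Qed.

Section S.
Variables (n : nat) (a b c : 'I_n) (k : nat).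
Hypotheses (ab : a < b) (bc : b < c) (ak : a.+1 <= k) (kb : k <= b).

Lemma tri_E (f : map_n n) : f \in triangle a b c <->
  (forall x y : 'I_n, x <= y -> f x <= f y) /\
  (forall x, [\/ f x = a, f x = b | f x = c]).
Proof.
rewrite inE; split.
  case/andP=> /forallP op /forallP v; split.
    by move=> x y xy; move: (op x) => /forallP /(_ y) /implyP; apply.
  move=> x; move: (v x); rewrite !inE.
  by case/or3P=> /eqP; [constructor 1|constructor 2|constructor 3].
case=> op v; apply/andP; split.
  by apply/forallP=> x; apply/forallP=> y; apply/implyP; apply: op.
by apply/forallP=> x; rewrite !inE; case: (v x)=> ->; rewrite eqxx ?orbT.
Qed.

Lemma eqa (f : map_n n) x : (forall x, [\/ f x = a, f x = b | f x = c]) ->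
  (f x == a) = (f x < k).
Proof.
move=> v; case: (v x) => ->.
- by rewrite eqxx; lia.
- have -> : (b == a) = false by apply/eqP=> E; move: ab; rewrite E ltnn.
  lia.
- have -> : (c == a) = false by apply/eqP=> E; move: ab bc; rewrite E; lia.
  lia.
Qed.

Lemma layer_E (f : map_n n) : f \in layer k a (triangle a b c) <->
  f \in triangle a b c /\ forall x, (f x == a) = (x < k).
Proof.
have kn : k <= n by have := ltn_ord b; lia.
rewrite /layer inE; split.
  case/andP=> T /eqP C; split => //.
  case/tri_E: T => op v.
  set A := [set x | f x == a] in C.
  have H : forall x y : 'I_n, x <= y -> y \in A -> x \in A.
    move=> x y xy; rewrite !inE !(eqa _ _ v) => fy.
    have := op _ _ xy; lia.
  by move=> x; have := @dc _ A H x; rewrite C inE.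
case=> T E; rewrite T /=.
have -> : [set x | f x == a] = [set x : 'I_n | x < k] by apply/setP=> x; rewrite !inE E.
by rewrite cardlt.
Qed.

Lemma abc_layer l : abc a b c k l \in layer k a (triangle a b c).
Proof.
apply/layer_E; split.
  apply/tri_E; split.
    move=> x y xy; rewrite !ffunE.
    case: ifP=> h1; case: ifP=> h2 //; try (case: ifP=> h3); try (case: ifP=> h4);
      try lia.
  by move=> x; rewrite ffunE; case: ifP=> _; [|case: ifP=> _];
    [constructor 1|constructor 2|constructor 3].
move=> x; rewrite ffunE; case: ifP=> h1; first by rewrite eqxx.
have Hb : (b == a) = false by apply/eqP=> E; move: ab; rewrite E ltnn.
have Hc : (c == a) = false by apply/eqP=> E; move: ab bc; rewrite E; lia.
by case: ifP; rewrite ?Hb ?Hc.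

Qed.

End S.


Theorem proposition27 (n : nat) (a b c : 'I_n) (k : nat) :
  a < b -> b < c -> a.+1 <= k -> k <= b ->
  layer k a (triangle a b c) =
    [set f | [exists i : 'I_(n - k).+1, f == abc a b c k (n - k - i)]]
  /\ subsemiring (layer k a (triangle a b c)) (triangle a b c).
Proof.
move=> ab bc ak kb.
have LE := layer_E _ _ _ _ _ ab bc ak kb.
split.
  apply/setP=> f; rewrite [in RHS]inE; apply/idP/idP; last first.
    by case/existsP=> i /eqP ->; apply: abc_layer.
  case/LE=> T E; case/tri_E: T => op v.
  set B := [set x | f x <= b].
  have HB : forall x y : 'I_n, x <= y -> y \in B -> x \in B.
    move=> x y xy; rewrite !inE => fy; exact: leq_trans (op _ _ xy) fy.
  have Bc := @dc _ B HB.
  have mn : #|B| <= n by have := max_card (mem B); rewrite card_ord.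
  have km : k <= #|B|.
    have k1n : k.-1 < n by have := ltn_ord b; lia.
    have fa : f (Ordinal k1n) = a by apply/eqP; rewrite E /=; lia.
    have : Ordinal k1n \in B by rewrite inE fa ltnW.
    rewrite Bc /= => h; rewrite -(prednK (leq_ltn_trans (leq0n a) ak)); exact: h.
  apply/existsP.
  have im : n - #|B| < (n - k).+1 by lia.
  exists (Ordinal im); apply/eqP/ffunP=> x; rewrite ffunE /=.
  rewrite (_ : k + (n - k - (n - #|B|)) = #|B|); last by lia.
  case: ifP=> xk; first by apply/eqP; rewrite E.
  have fna : f x != a by rewrite E xk.
  case: ifP=> xm.
    have : x \in B by rewrite Bc.
    rewrite inE; case: (v x) => fx; rewrite fx //.
      by rewrite fx eqxx in fna.
    by lia.
  have : x \notin B by rewrite Bc xm.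
  rewrite inE; case: (v x) => fx; rewrite fx //.
    by rewrite fx eqxx in fna.
  by rewrite leqnn.
split.
- by apply/subsetP=> f /LE [].
- by apply/set0Pn; exists (abc a b c k 0); apply: abc_layer.
- move=> f g /LE[Tf Ef] /LE[Tg Eg]; apply/LE; split.
    case/tri_E: Tf => opf vf; case/tri_E: Tg => opg vg.
    apply/tri_E; split.
      move=> x y xy; rewrite !ffunE; have := opf _ _ xy; have := opg _ _ xy.
      by case: ifP; case: ifP; lia.
    by move=> x; rewrite ffunE; case: ifP.
  by move=> x; rewrite ffunE; case: ifP=> _; [apply: Eg | apply: Ef].
- move=> f g /LE[Tf Ef] /LE[Tg Eg]; apply/LE; split.
    case/tri_E: Tf => opf vf; case/tri_E: Tg => opg vg.
    apply/tri_E; split.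
      by move=> x y xy; rewrite !ffunE; apply: opg; apply: opf.
    by move=> x; rewrite ffunE.
  case/tri_E: Tf => opf vf; case/tri_E: Tg => opg vg.
  move=> x; rewrite ffunE Eg -(eqa _ _ _ _ _ ab bc ak kb _ x vf).
  exact: Ef.
Qed.
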